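(* Let $N\ge3$, $h=1/N$, $\tau>0$, $\eta>0$, $\sigma\in\mathbb{R}$, $k\in\{2,3,4\}$, and let $\mathbf{X}^{m-p}=(x^{m-p},y^{m-p})^T\in\mathbb{X}^h$, $p=0,\dots,k-1$, be given. Let $\widetilde{\mathbf{X}}^{m+1}\in\mathbb{X}^h$ be the predicted curve (generated by the BDF$(k-1)$-ZJB scheme), with edges $\widetilde{\mathbf{h}}^{m+1}_j=\widetilde{\mathbf{X}}^{m+1}(\rho_j)-\widetilde{\mathbf{X}}^{m+1}(\rho_{j-1})$ and unit normals $\widetilde{\mathbf{n}}^{m+1}_j=(\widetilde n^{m+1}_{j,1},\widetilde n^{m+1}_{j,2})^T$ on $I_j$, $j=1,\dots,N$. Assume (i) $(\widetilde n^{m+1}_{1,1})^2+(\widetilde n^{m+1}_{N,1})^2>0$, and (ii) $\min_{1\le j\le N}|\widetilde{\mathbf{h}}^{m+1}_j|>0$. Then the linear system (BDF$k$-ZJB scheme): find $\mathbf{X}^{m+1}=(x^{m+1},y^{m+1})^T\in\mathbb{X}^h$ and $\kappa^{m+1}\in\mathbb{K}^h$ such that $$\Big\langle\tfrac{a\mathbf{X}^{m+1}-\widehat{\mathbf{X}}^m}{\tau},\widetilde{\mathbf{n}}^{m+1}\psi^h\Big\rangle^h_{\widetilde\Gamma^{m+1}}+\langle\partial_s\kappa^{m+1},\partial_s\psi^h\rangle_{\widetilde\Gamma^{m+1}}=0\quad\forall\psi^h\in\mathbb{K}^h,$$ $$\langle\kappa^{m+1}\widetilde{\mathbf{n}}^{m+1},\boldsymbol\omega^h\rangle^h_{\widetilde\Gamma^{m+1}}-\langle\partial_s\mathbf{X}^{m+1},\partial_s\boldsymbol\omega^h\rangle_{\widetilde\Gamma^{m+1}}+\sigma[\omega^h_1(1)-\omega^h_1(0)]$$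 $$-\frac1{\eta\tau}\Big[\big(a\,x^{m+1}(0)-\widehat x^m(0)\big)\omega^h_1(0)+\big(a\,x^{m+1}(1)-\widehat x^m(1)\big)\omega^h_1(1)\Big]=0\quad\forall\boldsymbol\omega^h=(\omega^h_1,\omega^h_2)^T\in\mathbb{X}^h,$$ is well-posed, i.e., it has a unique solution $(\mathbf{X}^{m+1},\kappa^{m+1})\in\mathbb{X}^h\times\mathbb{K}^h$.
   Context: Mesh: $\rho_j=jh$, $I_j=[\rho_{j-1},\rho_j]$. $\mathbb{K}^h$ = continuous functions on $[0,1]$ affine on each $I_j$; $\mathbb{K}^h_0=\{\psi\in\mathbb{K}^h:\psi(0)=\psi(1)=0\}$; $\mathbb{X}^h=\mathbb{K}^h\times\mathbb{K}^h_0$. For $\mathbf{Y}\in\mathbb{X}^h$ with edges $\mathbf{h}_j=\mathbf{Y}(\rho_j)-\mathbf{Y}(\rho_{j-1})\ne0$: normal on $I_j$ is $\big(-(\mathbf{h}_j)_2,(\mathbf{h}_j)_1\big)^T/|\mathbf{h}_j|$; $\partial_sf|_{I_j}=h\partial_\rho f|_{I_j}/|\mathbf{h}_j|$; $\langle u,v\rangle_{\mathbf{Y}}=\int_0^1u\cdot v|\partial_\rho\mathbf{Y}|d\rho$; $\langle u,v\rangle^h_{\mathbf{Y}}=\frac12\sum_{j=1}^N|\mathbf{h}_j|[(u\cdot v)(\rho_j^-)+(u\cdot v)(\rho_{j-1}^+)]$. $\widetilde\Gamma^{m+1}$ denotes the curve $\widetilde{\mathbf{X}}^{m+1}$, with respect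 to which normals, $\partial_s$ and inner products are taken. Coefficients: BDF2: $a=\frac32$, $\widehat{\mathbf{X}}^m=2\mathbf{X}^m-\frac12\mathbf{X}^{m-1}$; BDF3: $a=\frac{11}6$, $\widehat{\mathbf{X}}^m=3\mathbf{X}^m-\frac32\mathbf{X}^{m-1}+\frac13\mathbf{X}^{m-2}$; BDF4: $a=\frac{25}{12}$, $\widehat{\mathbf{X}}^m=4\mathbf{X}^m-3\mathbf{X}^{m-1}+\frac43\mathbf{X}^{m-2}-\frac14\mathbf{X}^{m-3}$; $\widehat x^m$ is the first component of $\widehat{\mathbf{X}}^m$. The BDF1-ZJB scheme is the ZJB (backward Euler) scheme, in which normals, $\partial_s$ and inner products are taken on the previous curve $\mathbf{X}^m$ and $a=1$, $\widehat{\mathbf{X}}^m=\mathbf{X}^m$; the BDF$j$-ZJB scheme uses as predicted curve the output of the BDF$(j-1)$-ZJB scheme. *)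

(* Defs.v *)
From HB Require Import structures.
From mathcomp Require Import all_boot all_order all_algebra.
From mathcomp Require Import reals.
Set Implicit Arguments. Unset Strict Implicit. Unset Printing Implicit Defensive.
Import Order.TTheory GRing.Theory Num.Theory.
Local Open Scope ring_scope.

(* Finite element functions in K^h on the uniform mesh rho_j = j h, h = 1/N,
   are represented by their nodal values (rho_0, ..., rho_N). *)
Section ZJB.
Context (R : realType) (N : nat).

Definition nodal := {ffun 'I_N.+1 -> R}.

Definition nv (f : nodal) (i : nat) : R := f (inord i).

Definition hmesh : R := (N%:R)^-1.

Definition in_K0 (f : nodal) : Prop := f ord0 = 0 /\ f ord_max = 0.

Definition dlt (f : nodal) (j : nat) : R := nv f j - nv f j.-1.

Definition elen (x y : nodal) (j : nat) : R :=
  Num.sqrt (dlt x j ^+ 2 + dlt y j ^+ 2).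

Definition nrm1 (x y : nodal) (j : nat) : R := - dlt y j / elen x y j.
Definition nrm2 (x y : nodal) (j : nat) : R := dlt x j / elen x y j.

(* mass-lumped inner product on the curve (x,y):
   1/2 sum_j |h_j| [ g(j, rho_j^-) + g(j, rho_{j-1}^+) ],
   where g j i is the value of u.v restricted to element I_j at node i *)
Definition lumped (x y : nodal) (g : nat -> nat -> R) : R :=
  2^-1 * \sum_(1 <= j < N.+1) elen x y j * (g j j + g j j.-1).

(* d_s f on I_j = h d_rho f / |h_j|, with d_rho f = (f_j - f_{j-1})/h on I_j *)
Definition ds (x y f : nodal) (j : nat) : R :=
  hmesh * (dlt f j / hmesh) / elen x y j.

(* <d_s f, d_s g>_Y = sum_j int_{I_j} d_s f d_s g |d_rho Y| drho, where the
   integrand is constant on I_j and |d_rho Y| = |h_j|/h there *)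
Definition stiff (x y f g : nodal) : R :=
  \sum_(1 <= j < N.+1) ds x y f j * ds x y g j * (hmesh * (elen x y j / hmesh)).

(* BDFk coefficients; X p stands for X^{m-p} *)
Definition bdf_a (k : nat) : R :=
  match k with
  | 2 => 3 / 2
  | 3 => 11 / 6
  | 4 => 25 / 12
  | _ => 1
  end.

Definition bdf_hat (k : nat) (X : nat -> nodal) : nodal :=
  [ffun i =>
    match k with
    | 2 => 2 * X 0%N i - 2^-1 * X 1%N i
    | 3 => 3 * X 0%N i - 3 / 2 * X 1%N i + 3^-1 * X 2%N i
    | 4 => 4 * X 0%N i - 3 * X 1%N i + 4 / 3 * X 2%N i - 4^-1 * X 3%N i
    | _ => X 0%N i
    end].

Definition zjb_solution (k : nat) (tau eta sigma : R)
    (xs ys : nat -> nodal) (xt yt : nodal) (x y kap : nodal) : Prop :=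
  let a := bdf_a k in
  let xh := bdf_hat k xs in
  let yh := bdf_hat k ys in
  in_K0 y /\
  (forall psi : nodal,
     lumped xt yt (fun j i =>
        ((a * nv x i - nv xh i) / tau * nrm1 xt yt j
         + (a * nv y i - nv yh i) / tau * nrm2 xt yt j) * nv psi i)
     + stiff xt yt kap psi = 0) /\
  (forall w1 w2 : nodal, in_K0 w2 ->
     lumped xt yt (fun j i =>
        nv kap i * nrm1 xt yt j * nv w1 i + nv kap i * nrm2 xt yt j * nv w2 i)
     - (stiff xt yt x w1 + stiff xt yt y w2)
     + sigma * (w1 ord_max - w1 ord0)
     - (eta * tau)^-1 * ((a * x ord0 - xh ord0) * w1 ord0
                         + (a * x ord_max - xh ord_max) * w1 ord_max) = 0).

End ZJB.

(* Main.v *)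
Require Import Defs.
From HB Require Import structures.
From mathcomp Require Import all_boot all_order all_algebra.
From mathcomp Require Import reals ring lra zify.
Import Order.TTheory GRing.Theory Num.Theory.
Local Open Scope ring_scope.


Lemma lin_surj (R : realType) (I : finType) (L : {ffun I -> R} -> {ffun I -> R}) :
  (forall c (u v : {ffun I -> R}), L [ffun i => c * u i + v i] = [ffun i => c * L u i + L v i]) ->
  (forall u, L u = 0 -> u = 0) -> forall b, exists u, L u = b.
Proof.
move=> linL injL b.
pose phi (f : {ffun I -> R}) : 'rV[R]_#|I| := \row_j f (enum_val j).
pose psi (v : 'rV[R]_#|I|) : {ffun I -> R} := [ffun i => v 0 (enum_rank i)].
have psiK f : psi (phi f) = f by apply/ffunP => i; rewrite ffunE mxE enum_rankK.
have phiK v : phi (psi v) = v.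
  by apply/rowP => j; rewrite !mxE ffunE enum_valK.
have L0 : L 0 = 0.
  have := linL 1 0 0.
  have -> : [ffun i => 1 * (0 : {ffun I -> R}) i + (0 : {ffun I -> R}) i] = 0.
    by apply/ffunP => i; rewrite !ffunE mul1r addr0.
  move=> H; apply/ffunP => i; move/ffunP: H => /(_ i); rewrite !ffunE mul1r.
  by move/eqP; rewrite -subr_eq0 opprD addrA subrr sub0r oppr_eq0 => /eqP.
pose Lm v := phi (L (psi v)).
have psilin c u v : psi (c *: u + v) = [ffun i => c * psi u i + psi v i].
  by apply/ffunP => i; rewrite !ffunE !mxE.
have Lmlin c u v : Lm (c *: u + v) = c *: Lm u + Lm v.
  rewrite /Lm psilin linL; apply/rowP => j; rewrite !mxE ffunE.
  by rewrite /psi.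
have Lm0 : Lm 0 = 0.
  rewrite /Lm; have -> : psi 0 = 0 by apply/ffunP => i; rewrite !ffunE mxE.
  by rewrite L0; apply/rowP => j; rewrite !mxE ffunE.
have LmD (u v : 'rV[R]_#|I|) : Lm (u + v) = Lm u + Lm v.
  by have := Lmlin 1 u v; rewrite !scale1r.
have LmZ c (u : 'rV[R]_#|I|) : Lm (c *: u) = c *: Lm u.
  by have := Lmlin c u 0; rewrite !addr0 Lm0 addr0.
pose M := \matrix_(i, j) Lm (delta_mx 0 i) 0 j.
have MLm v : v *m M = Lm v.
  rewrite {2}(row_sum_delta v).
  have -> : Lm (\sum_(j < #|I|) v 0 j *: 'e_j) = \sum_(j < #|I|) v 0 j *: Lm 'e_j.
    apply: (big_ind2 (fun a b => Lm a = b)) => //.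
    - by move=> x1 x2 y1 y2 H1 H2; rewrite LmD H1 H2.
  apply/rowP => j; rewrite !mxE summxE; apply: eq_bigr => i _.
  by rewrite !mxE.
have Mfree : row_free M.
  apply: inj_row_free => v; rewrite MLm /Lm => H.
  have H1 : L (psi v) = 0 by rewrite -[L _]psiK H; apply/ffunP => i; rewrite !ffunE mxE.
  by rewrite -(phiK v) (injL _ H1); apply/rowP => j; rewrite !mxE ffunE.
have Mu : M \in unitmx by rewrite -row_free_unit.
exists (psi (phi b *m invmx M)).
by rewrite -[L _]psiK -/(Lm _) -MLm mulmxKV // psiK.
Qed.

Section Main.
Variables (R : realType) (N : nat) (k : nat) (tau eta : R) (xt yt : nodal R N).

Local Notation nod := (nodal R N).

Definition z0 : nod := [ffun => 0].
Definition ee (i : 'I_N.+1) : nod := [ffun l => (l == i)%:R].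

Definition body1 (xh yh x y psi : nod) := fun j i =>
  ((bdf_a R k * nv x i - nv xh i) / tau * nrm1 xt yt j
   + (bdf_a R k * nv y i - nv yh i) / tau * nrm2 xt yt j) * nv psi i.
Definition Eq1 (xh yh x y kap psi : nod) :=
  lumped xt yt (body1 xh yh x y psi) + stiff xt yt kap psi.
Definition body2 (kap w1 w2 : nod) := fun j i =>
  nv kap i * nrm1 xt yt j * nv w1 i + nv kap i * nrm2 xt yt j * nv w2 i.
Definition Eq2 (xh : nod) (sg : R) (x y kap w1 w2 : nod) :=
  lumped xt yt (body2 kap w1 w2) - (stiff xt yt x w1 + stiff xt yt y w2)
  + sg * (w1 ord_max - w1 ord0)
  - (eta * tau)^-1 * ((bdf_a R k * x ord0 - xh ord0) * w1 ord0
                      + (bdf_a R k * x ord_max - xh ord_max) * w1 ord_max).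
Definition sol (xh yh : nod) (sg : R) (x y kap : nod) :=
  in_K0 y /\ (forall psi, Eq1 xh yh x y kap psi = 0) /\
  (forall w1 w2, in_K0 w2 -> Eq2 xh sg x y kap w1 w2 = 0).

Lemma zjb_sol sigma xs ys x y kap :
  zjb_solution k tau eta sigma xs ys xt yt x y kap <->
  sol (bdf_hat k xs) (bdf_hat k ys) sigma x y kap.
Proof. by []. Qed.

Lemma lumped_lin G G1 G2 c1 c2 :
  (forall j i, G j i = c1 * G1 j i + c2 * G2 j i) ->
  lumped xt yt G = c1 * lumped xt yt G1 + c2 * lumped xt yt G2.
Proof.
move=> H; rewrite /lumped !mulr_sumr -big_split; apply: eq_bigr => j _.
rewrite /= !H; ring.
Qed.

Lemma stiff_lin1 (f f1 f2 g : nod) c1 c2 :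
  (forall i, f i = c1 * f1 i + c2 * f2 i) ->
  stiff xt yt f g = c1 * stiff xt yt f1 g + c2 * stiff xt yt f2 g.
Proof.
move=> H; rewrite /stiff !mulr_sumr -big_split; apply: eq_bigr => j _.
rewrite /= /ds /dlt /nv !H; ring.
Qed.

Lemma stiff_sym (f g : nod) : stiff xt yt f g = stiff xt yt g f.
Proof. rewrite /stiff; apply: eq_bigr => j _; ring. Qed.

Lemma stiff_lin2 (f g g1 g2 : nod) c1 c2 :
  (forall i, g i = c1 * g1 i + c2 * g2 i) ->
  stiff xt yt f g = c1 * stiff xt yt f g1 + c2 * stiff xt yt f g2.
Proof. by move=> H; rewrite !(stiff_sym f) (@stiff_lin1 _ _ _ _ _ _ H). Qed.

Lemma Eq1_lin (xh yh x y kap xh1 yh1 x1 y1 kap1 xh2 yh2 x2 y2 kap2 psi : nod) c1 c2 :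
  (forall i, xh i = c1 * xh1 i + c2 * xh2 i) ->
  (forall i, yh i = c1 * yh1 i + c2 * yh2 i) ->
  (forall i, x i = c1 * x1 i + c2 * x2 i) ->
  (forall i, y i = c1 * y1 i + c2 * y2 i) ->
  (forall i, kap i = c1 * kap1 i + c2 * kap2 i) ->
  Eq1 xh yh x y kap psi = c1 * Eq1 xh1 yh1 x1 y1 kap1 psi + c2 * Eq1 xh2 yh2 x2 y2 kap2 psi.
Proof.
move=> Hxh Hyh Hx Hy Hk; rewrite /Eq1 (@stiff_lin1 _ _ _ _ _ _ Hk).
rewrite (@lumped_lin _ (body1 xh1 yh1 x1 y1 psi) (body1 xh2 yh2 x2 y2 psi) c1 c2).
  ring.
move=> j i; rewrite /body1 /nv Hxh Hyh Hx Hy; ring.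
Qed.

Lemma Eq1_test (xh yh x y kap psi psi1 psi2 : nod) c1 c2 :
  (forall i, psi i = c1 * psi1 i + c2 * psi2 i) ->
  Eq1 xh yh x y kap psi = c1 * Eq1 xh yh x y kap psi1 + c2 * Eq1 xh yh x y kap psi2.
Proof.
move=> Hp; rewrite /Eq1 (@stiff_lin2 _ _ _ _ _ _ Hp).
rewrite (@lumped_lin _ (body1 xh yh x y psi1) (body1 xh yh x y psi2) c1 c2).
  ring.
move=> j i; rewrite /body1 /nv Hp; ring.
Qed.

Lemma Eq2_lin (xh x y kap xh1 x1 y1 kap1 xh2 x2 y2 kap2 w1 w2 : nod) sg sg1 sg2 c1 c2 :
  (forall i, xh i = c1 * xh1 i + c2 * xh2 i) ->
  sg = c1 * sg1 + c2 * sg2 ->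
  (forall i, x i = c1 * x1 i + c2 * x2 i) ->
  (forall i, y i = c1 * y1 i + c2 * y2 i) ->
  (forall i, kap i = c1 * kap1 i + c2 * kap2 i) ->
  Eq2 xh sg x y kap w1 w2 = c1 * Eq2 xh1 sg1 x1 y1 kap1 w1 w2 + c2 * Eq2 xh2 sg2 x2 y2 kap2 w1 w2.
Proof.
move=> Hxh Hsg Hx Hy Hk; rewrite /Eq2 (@stiff_lin1 _ _ _ _ _ _ Hx) (@stiff_lin1 _ _ _ _ _ _ Hy).
rewrite (@lumped_lin _ (body2 kap1 w1 w2) (body2 kap2 w1 w2) c1 c2).
  rewrite Hsg (Hx ord0) (Hx ord_max) (Hxh ord0) (Hxh ord_max); ring.
move=> j i; rewrite /body2 /nv Hk; ring.
Qed.

Lemma Eq2_test (xh x y kap w1 w2 v1 v2 u1 u2 : nod) sg c1 c2 :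
  (forall i, w1 i = c1 * v1 i + c2 * u1 i) ->
  (forall i, w2 i = c1 * v2 i + c2 * u2 i) ->
  Eq2 xh sg x y kap w1 w2 = c1 * Eq2 xh sg x y kap v1 v2 + c2 * Eq2 xh sg x y kap u1 u2.
Proof.
move=> H1 H2; rewrite /Eq2 (@stiff_lin2 _ _ _ _ _ _ H1) (@stiff_lin2 _ _ _ _ _ _ H2).
rewrite (@lumped_lin _ (body2 kap v1 v2) (body2 kap u1 u2) c1 c2).
  rewrite (H1 ord0) (H1 ord_max); ring.
move=> j i; rewrite /body2 /nv H1 H2; ring.
Qed.


Lemma expand (F : nod -> R) :
  (forall (p p1 p2 : nod) c1 c2, (forall i, p i = c1 * p1 i + c2 * p2 i) ->
     F p = c1 * F p1 + c2 * F p2) ->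
  forall psi, F psi = \sum_(i < N.+1) psi i * F (ee i).
Proof.
move=> HF psi.
have F0 : F 0 = 0.
  have := HF 0 0 0 0 0; rewrite !mul0r addr0; apply => j.
  by rewrite ffunE mul0r addr0.
have FD p q : F (p + q) = F p + F q.
  have := HF (p + q) p q 1 1; rewrite !mul1r; apply => j.
  by rewrite ffunE !mul1r.
have FZ c (p : nod) : F [ffun l => c * p l] = c * F p.
  have := HF _ p 0 c 0; rewrite mul0r addr0; apply => j.
  by rewrite !ffunE mul0r addr0.
have Epsi : psi = \sum_(i < N.+1) [ffun l => psi i * ee i l].
  apply/ffunP => l; rewrite sum_ffunE (bigD1 l) //= big1 ?addr0.
    by rewrite !ffunE eqxx mulr1.
  by move=> i /negbTE Hi; rewrite !ffunE eq_sym Hi mulr0.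
rewrite {1}Epsi (big_morph F FD F0); apply: eq_bigr => i _.
exact: FZ.
Qed.

Definition o0 : 'I_3 := @Ordinal 3 0 isT.
Definition o1 : 'I_3 := @Ordinal 3 1 isT.
Definition o2 : 'I_3 := @Ordinal 3 2 isT.
Local Notation U := {ffun 'I_3 * 'I_N.+1 -> R}.
Definition ux (u : U) : nod := [ffun i => u (o0, i)].
Definition uy (u : U) : nod := [ffun i => u (o1, i)].
Definition uk (u : U) : nod := [ffun i => u (o2, i)].
Definition enc (x y kap : nod) : U :=
  [ffun p => if p.1 == o0 then x p.2 else if p.1 == o1 then y p.2 else kap p.2].

Lemma encK x y kap :
  ux (enc x y kap) = x /\ uy (enc x y kap) = y /\ uk (enc x y kap) = kap.
Proof. by split; [|split]; apply/ffunP => i; rewrite !ffunE. Qed.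

Lemma ord3 (b : 'I_3) : [\/ b = o0, b = o1 | b = o2].
Proof.
case: b => [[|[|[|b]]] Hb] //.
- by apply: Or31; apply: val_inj.
- by apply: Or32; apply: val_inj.
- by apply: Or33; apply: val_inj.
Qed.

Lemma uK (u : U) : u = enc (ux u) (uy u) (uk u).
Proof.
apply/ffunP => -[b i]; rewrite !ffunE /=.
by case: (ord3 b) => ->; rewrite ?ffunE.
Qed.

Definition EE (xh yh : nod) (sg : R) (u : U) : U :=
  [ffun p => if p.1 == o0 then Eq1 xh yh (ux u) (uy u) (uk u) (ee p.2)
    else if p.1 == o1 then Eq2 xh sg (ux u) (uy u) (uk u) (ee p.2) z0
    else if (p.2 == ord0) || (p.2 == ord_max) then uy u p.2
    else Eq2 xh sg (ux u) (uy u) (uk u) z0 (ee p.2)].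

Lemma EE_split xh yh sg u p :
  EE xh yh sg u p = EE z0 z0 0 u p + EE xh yh sg 0 p.
Proof.
rewrite -[X in _ = X + _]mul1r -[X in _ = _ + X]mul1r !ffunE.
case: ifP => _; [apply: Eq1_lin|case: ifP => _; [apply: Eq2_lin|
  case: ifP => _; [|apply: Eq2_lin]]];
  try (move=> i); rewrite ?ffunE; ring.
Qed.

Lemma EE0_lin c (u v : U) p :
  EE z0 z0 0 [ffun q => c * u q + v q] p = c * EE z0 z0 0 u p + EE z0 z0 0 v p.
Proof.
rewrite -[X in _ = _ + X]mul1r !ffunE.
case: ifP => _; [apply: Eq1_lin|case: ifP => _; [apply: Eq2_lin|
  case: ifP => _; [|apply: Eq2_lin]]];
  try (move=> i); rewrite ?ffunE; ring.
Qed.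


Lemma EE_sol xh yh sg (u : U) :
  EE xh yh sg u = 0 -> sol xh yh sg (ux u) (uy u) (uk u).
Proof.
move=> H; have Hp p : EE xh yh sg u p = 0 by rewrite H ffunE.
split; [|split].
- split.
  + by have := Hp (o2, ord0); rewrite ffunE /=.
  + by have := Hp (o2, ord_max); rewrite ffunE /= eqxx orbT.
- move=> psi.
  have -> : Eq1 xh yh (ux u) (uy u) (uk u) psi =
     \sum_(i < N.+1) psi i * Eq1 xh yh (ux u) (uy u) (uk u) (ee i).
    apply: (expand (fun w => Eq1 xh yh (ux u) (uy u) (uk u) w)).
    by move=> p p1 p2 c1 c2; apply: Eq1_test.
  apply: big1 => i _.
  by have := Hp (o0, i); rewrite ffunE /= => ->; rewrite mulr0.
- move=> w1 w2 [Hw0 HwN].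
  rewrite (@Eq2_test _ _ _ _ w1 w2 w1 z0 z0 w2 _ 1 1); first last.
  + by move=> i; rewrite ffunE; ring.
  + by move=> i; rewrite ffunE; ring.
  have -> : Eq2 xh sg (ux u) (uy u) (uk u) w1 z0 =
     \sum_(i < N.+1) w1 i * Eq2 xh sg (ux u) (uy u) (uk u) (ee i) z0.
    apply: (expand (fun w => Eq2 xh sg (ux u) (uy u) (uk u) w z0)).
    move=> p p1 p2 c1 c2 Hq; apply: Eq2_test => // i; rewrite ffunE; ring.
  have -> : Eq2 xh sg (ux u) (uy u) (uk u) z0 w2 =
     \sum_(i < N.+1) w2 i * Eq2 xh sg (ux u) (uy u) (uk u) z0 (ee i).
    apply: (expand (fun w => Eq2 xh sg (ux u) (uy u) (uk u) z0 w)).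
    move=> p p1 p2 c1 c2 Hq; apply: Eq2_test => // i; rewrite ffunE; ring.
  rewrite big1; last first.
    by move=> i _; have := Hp (o1, i); rewrite ffunE /= => ->; rewrite mulr0.
  rewrite big1; first by rewrite mulr0 addr0.
  move=> i _; case: (boolP ((i == ord0) || (i == ord_max))).
  + by case/orP => /eqP ->; rewrite ?Hw0 ?HwN mul0r.
  + move=> Hi; have := Hp (o2, i); rewrite ffunE /= (negbTE Hi) => ->.
    by rewrite mulr0.
Qed.

Lemma sol_EE xh yh sg x y kap :
  sol xh yh sg x y kap -> EE xh yh sg (enc x y kap) = 0.
Proof.
move=> [Hy [H1 H2]]; apply/ffunP => -[b i].
have [E1 [E2 E3]] := encK x y kap.
rewrite !ffunE E1 E2 E3 /=.
case: ifP => _; first exact: H1.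
case: ifP => _.
  by apply: H2; split; rewrite ffunE.
case: ifP => Hb.
  by case/orP: Hb => /eqP ->; case: Hy.
apply: H2; move/norP: Hb => [h0 hN].
by split; rewrite ffunE eq_sym ?(negbTE h0) ?(negbTE hN).
Qed.


Lemma a_pos : 0 < bdf_a R k.
Proof.
rewrite /bdf_a; case: k => [|[|[|[|[|kk]]]]] //; apply: divr_gt0 => //.
Qed.

Lemma hmesh_gt0 : (0 < N)%N -> 0 < hmesh R N.
Proof. by move=> HN; rewrite /hmesh invr_gt0 ltr0n. Qed.

Lemma stiff_ge0 (f : nod) : 0 <= stiff xt yt f f.
Proof.
rewrite /stiff; apply: sumr_ge0 => j _.
apply: mulr_ge0; first by rewrite -expr2 sqr_ge0.
apply: mulr_ge0; first by rewrite /hmesh invr_ge0 ler0n.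
by apply: divr_ge0; [apply: sqrtr_ge0 | rewrite /hmesh invr_ge0 ler0n].
Qed.

Lemma nv_inord (f : nod) (i : 'I_N.+1) : nv f i = f i.
Proof. by rewrite /nv inord_val. Qed.

Lemma stiff_eq0 (f : nod) : (0 < N)%N ->
  (forall j, (1 <= j <= N)%N -> 0 < elen xt yt j) ->
  stiff xt yt f f = 0 -> forall i : 'I_N.+1, f i = f ord0.
Proof.
move=> HN Hel H.
have hm : hmesh R N != 0 by rewrite gt_eqF // hmesh_gt0.
have Hd j : (1 <= j <= N)%N -> dlt f j = 0.
  move=> Hj; have el : elen xt yt j != 0 by rewrite gt_eqF // Hel.
  move: H => /eqP; rewrite psumr_eq0; last first.
    move=> i _; apply: mulr_ge0; first by rewrite -expr2 sqr_ge0.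
    apply: mulr_ge0; first by rewrite /hmesh invr_ge0 ler0n.
    by apply: divr_ge0; [apply: sqrtr_ge0 | rewrite /hmesh invr_ge0 ler0n].
  move/allP => /(_ j); rewrite mem_index_iota ltnS Hj => /(_ isT) /eqP.
  have -> : ds xt yt f j * ds xt yt f j * (hmesh R N * (elen xt yt j / hmesh R N))
     = dlt f j ^+ 2 / elen xt yt j by rewrite /ds; field; rewrite hm el.
  by move/eqP; rewrite mulf_eq0 invr_eq0 (negbTE el) orbF sqrf_eq0 => /eqP.
have Hc n : (n <= N)%N -> nv f n = nv f 0.
  elim: n => [//|n IH] Hn.
  have := Hd n.+1; rewrite Hn /= => /(_ isT); rewrite /dlt /= => /eqP.
  by rewrite subr_eq0 => /eqP ->; apply: IH; apply: ltnW.
move=> i; rewrite -nv_inord Hc ?(leq_ord i) // /nv.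
by congr (f _); apply: val_inj; rewrite /= inordK.
Qed.


Lemma nv_ee (i : 'I_N.+1) j : (j <= N)%N -> nv (ee i) j = (j == i)%:R.
Proof.
move=> Hj; rewrite /nv ffunE.
have -> : (inord j == i) = (j == i :> nat); last by [].
apply/idP/idP => /eqP H; apply/eqP; first by rewrite -H inordK.
by apply: val_inj; rewrite /= inordK.
Qed.

Lemma nv_z0 j : nv z0 j = 0.
Proof. by rewrite /nv ffunE. Qed.

Lemma nv_const (f : nod) : (forall i, f i = f ord0) -> forall j, nv f j = f ord0.
Proof. by move=> H j; rewrite /nv H. Qed.

Lemma lumped_e0 (kap : nod) : (forall i, kap i = kap ord0) -> (1 <= N)%N ->
  lumped xt yt (body2 kap (ee ord0) z0) = 2^-1 * (elen xt yt 1 * (kap ord0 * nrm1 xt yt 1)).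
Proof.
move=> Hk HN; rewrite /lumped big_ltn ?ltnS // big_nat_cond big1 ?addr0.
  rewrite /body2 !(@nv_const kap Hk) !nv_z0 !nv_ee //=; ring.
move=> j /andP [/andP [Hj1 Hj2] _]; rewrite /body2 !nv_z0 !nv_ee; try lia.
rewrite (_ : (j == ord0 :> nat) = false); last by apply/negbTE; rewrite /=; lia.
rewrite (_ : (j.-1 == ord0 :> nat) = false); last by apply/negbTE; rewrite /=; lia.
rewrite /=; ring.
Qed.

Lemma lumped_eN (kap : nod) : (forall i, kap i = kap ord0) -> (1 <= N)%N ->
  lumped xt yt (body2 kap (ee ord_max) z0) = 2^-1 * (elen xt yt N * (kap ord0 * nrm1 xt yt N)).
Proof.
move=> Hk HN; rewrite /lumped big_nat_recr //= big_nat_cond big1 ?add0r.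
  rewrite /body2 !(@nv_const kap Hk) !nv_z0 !nv_ee ?leq_pred // eqxx.
  rewrite (_ : (N.-1 == N) = false); last by apply/negbTE; lia.
  rewrite /=; ring.
move=> j /andP [/andP [Hj1 Hj2] _]; rewrite /body2 !nv_z0 !nv_ee; try lia.
rewrite (_ : (j == ord_max :> nat) = false); last by apply/negbTE; rewrite /=; lia.
rewrite (_ : (j.-1 == ord_max :> nat) = false); last by apply/negbTE; rewrite /=; lia.
rewrite /=; ring.
Qed.

Lemma homog x y kap : (3 <= N)%N -> 0 < tau -> 0 < eta ->
  (forall j, (1 <= j <= N)%N -> 0 < elen xt yt j) ->
  0 < nrm1 xt yt 1 ^+ 2 + nrm1 xt yt N ^+ 2 ->
  sol z0 z0 0 x y kap -> x = z0 /\ y = z0 /\ kap = z0.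
Proof.
move=> HN3 Htau Heta Hel Hn [Hy [H1 H2]].
have HN : (0 < N)%N by apply: leq_trans HN3.
have Ha := a_pos.
have Sk := H1 kap; have := H2 x y Hy; rewrite /Eq2 => Sx.
rewrite /Eq1 in Sk.
have HL1 : lumped xt yt (body1 z0 z0 x y kap) =
    bdf_a R k / tau * lumped xt yt (body2 kap x y) + 0 * lumped xt yt (body2 kap x y).
  by apply: lumped_lin => j i; rewrite /body1 /body2 /= !nv_z0; ring.
rewrite HL1 in Sk.
have gk := stiff_ge0 kap; have gx := stiff_ge0 x; have gy := stiff_ge0 y.
rewrite !ffunE in Sx.
have HL : lumped xt yt (body2 kap x y) = - (tau / bdf_a R k * stiff xt yt kap kap).
  apply/eqP; rewrite -subr_eq0.
  have -> : lumped xt yt (body2 kap x y) - - (tau / bdf_a R k * stiff xt yt kap kap) =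
     tau / bdf_a R k * (bdf_a R k / tau * lumped xt yt (body2 kap x y)
       + 0 * lumped xt yt (body2 kap x y) + stiff xt yt kap kap).
    by field; apply/andP; split; rewrite gt_eqF.
  by rewrite Sk mulr0.
have p0 : 0 <= tau / bdf_a R k * stiff xt yt kap kap.
  by apply: mulr_ge0 => //; apply: divr_ge0; apply: ltW.
have q0 : 0 < (eta * tau)^-1 * bdf_a R k by rewrite mulr_gt0 // invr_gt0 mulr_gt0.
have r0 : 0 <= (eta * tau)^-1 * bdf_a R k * (x ord0 ^+ 2) by rewrite mulr_ge0 ?sqr_ge0 ?ltW.
have r1 : 0 <= (eta * tau)^-1 * bdf_a R k * (x ord_max ^+ 2) by rewrite mulr_ge0 ?sqr_ge0 ?ltW.
rewrite HL in Sx.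
have key : tau / bdf_a R k * stiff xt yt kap kap + stiff xt yt x x + stiff xt yt y y
   + (eta * tau)^-1 * bdf_a R k * (x ord0 ^+ 2)
   + (eta * tau)^-1 * bdf_a R k * (x ord_max ^+ 2) = 0.
  rewrite -oppr0 -[X in _ = - X]Sx; ring.
have eK : tau / bdf_a R k * stiff xt yt kap kap = 0 by lra.
have eX : stiff xt yt x x = 0 by lra.
have eY : stiff xt yt y y = 0 by lra.
have e0 : (eta * tau)^-1 * bdf_a R k * (x ord0 ^+ 2) = 0 by lra.
have ta : tau / bdf_a R k != 0 by rewrite mulf_neq0 // ?invr_eq0 gt_eqF.
have eK' : stiff xt yt kap kap = 0.
  by move/eqP: eK; rewrite mulf_eq0 (negbTE ta) /= => /eqP.
have x00 : x ord0 = 0.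
  by move/eqP: e0; rewrite mulf_eq0 (gt_eqF q0) /= sqrf_eq0 => /eqP.
have hx i : x i = 0 by rewrite (@stiff_eq0 x HN Hel eX) x00.
have hy i : y i = 0 by rewrite (@stiff_eq0 y HN Hel eY); case: Hy.
have hk := @stiff_eq0 kap HN Hel eK'.
have hX : x = z0 by apply/ffunP => i; rewrite hx ffunE.
have hY : y = z0 by apply/ffunP => i; rewrite hy ffunE.
have K0z : in_K0 z0 by split; rewrite ffunE.
have s0 : forall w, stiff xt yt z0 w = 0.
  move=> w; rewrite (@stiff_lin1 z0 z0 z0 w 0 0) ?mul0r ?addr0 // => i.
  by rewrite ffunE mul0r addr0.
have A0 := H2 (ee ord0) z0 K0z.
have AN := H2 (ee ord_max) z0 K0z.
rewrite /Eq2 hX hY !s0 !ffunE in A0 AN.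
rewrite (@lumped_e0 kap hk HN) in A0.
rewrite (@lumped_eN kap hk HN) in AN.
have el1 : elen xt yt 1 != 0 by rewrite gt_eqF // Hel //; lia.
have elN : elen xt yt N != 0 by rewrite gt_eqF // Hel //; lia.
have c1 : kap ord0 * nrm1 xt yt 1 = 0.
  have : 2^-1 * (elen xt yt 1 * (kap ord0 * nrm1 xt yt 1)) = 0.
    by rewrite -[RHS]A0 !(mulr0, mul0r, subrr, addr0, subr0, add0r).
  by move/eqP; rewrite mulf_eq0 invr_eq0 pnatr_eq0 /= mulf_eq0 (negbTE el1) /= => /eqP.
have cN : kap ord0 * nrm1 xt yt N = 0.
  have : 2^-1 * (elen xt yt N * (kap ord0 * nrm1 xt yt N)) = 0.
    by rewrite -[RHS]AN !(mulr0, mul0r, subrr, addr0, subr0, add0r).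
  by move/eqP; rewrite mulf_eq0 invr_eq0 pnatr_eq0 /= mulf_eq0 (negbTE elN) /= => /eqP.
have c00 : kap ord0 = 0.
  have : kap ord0 ^+ 2 * (nrm1 xt yt 1 ^+ 2 + nrm1 xt yt N ^+ 2) = 0.
    have -> : kap ord0 ^+ 2 * (nrm1 xt yt 1 ^+ 2 + nrm1 xt yt N ^+ 2) =
      (kap ord0 * nrm1 xt yt 1) ^+ 2 + (kap ord0 * nrm1 xt yt N) ^+ 2 by ring.
    by rewrite c1 cN; ring.
  by move/eqP; rewrite mulf_eq0 (gt_eqF Hn) orbF sqrf_eq0 => /eqP.
split=> //; split=> //.
by apply/ffunP => i; rewrite hk c00 ffunE.
Qed.


Lemma main_sec sigma xs ys : (3 <= N)%N -> 0 < tau -> 0 < eta ->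
  (forall j, (1 <= j <= N)%N -> 0 < elen xt yt j) ->
  0 < nrm1 xt yt 1 ^+ 2 + nrm1 xt yt N ^+ 2 ->
  exists! s : nod * nod * nod,
    zjb_solution k tau eta sigma xs ys xt yt s.1.1 s.1.2 s.2.
Proof.
move=> HN3 Htau Heta Hel Hn.
have inj (u : U) : EE z0 z0 0 u = 0 -> u = 0.
  move/EE_sol/(@homog _ _ _ HN3 Htau Heta Hel Hn) => [hx [hy hk]].
  rewrite (uK u) hx hy hk; apply/ffunP => p; rewrite !ffunE.
  by case: ifP => //; case: ifP.
have lin c (u v : U) : EE z0 z0 0 [ffun i => c * u i + v i] =
    [ffun i => c * EE z0 z0 0 u i + EE z0 z0 0 v i].
  by apply/ffunP => p; rewrite [RHS]ffunE; apply: EE0_lin.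
have [u0 Hu0] := @lin_surj _ _ _ lin inj (- EE (bdf_hat k xs) (bdf_hat k ys) sigma 0).
have Hs0 : EE (bdf_hat k xs) (bdf_hat k ys) sigma u0 = 0.
  apply/ffunP => p; rewrite EE_split Hu0.
  by rewrite [X in X + _]ffunE addNr ffunE.
exists (ux u0, uy u0, uk u0); split.
  by apply/zjb_sol/EE_sol.
move=> [[x y] kap] /= /zjb_sol Hs.
have E1 := @sol_EE _ _ _ _ _ _ Hs.
have H0 : [ffun i => (-1) * u0 i + enc x y kap i] = 0.
  apply: inj; rewrite lin; apply/ffunP => p; rewrite [LHS]ffunE [RHS]ffunE.
  have a1 := EE_split (bdf_hat k xs) (bdf_hat k ys) sigma u0 p.
  have a2 := EE_split (bdf_hat k xs) (bdf_hat k ys) sigma (enc x y kap) p.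
  have b1 : EE (bdf_hat k xs) (bdf_hat k ys) sigma u0 p = 0 by rewrite Hs0 ffunE.
  have b2 : EE (bdf_hat k xs) (bdf_hat k ys) sigma (enc x y kap) p = 0 by rewrite E1 ffunE.
  lra.
have Henc : enc x y kap = u0.
  apply/ffunP => p; move/ffunP: H0 => /(_ p); rewrite !ffunE => H; lra.
have [E1' [E2' E3']] := encK x y kap.
by rewrite -Henc E1' E2' E3'.
Qed.

End Main.

Theorem theorem3p2 (R : realType) (N : nat) (tau eta sigma : R) (k : nat)
    (xs ys : nat -> nodal R N) (xt yt : nodal R N) :
  (3 <= N)%N -> 0 < tau -> 0 < eta -> k \in [:: 2%N; 3%N; 4%N] ->
  (forall p, (p < k)%N -> in_K0 (ys p)) ->
  in_K0 yt ->
  0 < nrm1 xt yt 1 ^+ 2 + nrm1 xt yt N ^+ 2 ->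
  0 < \big[Num.min/elen xt yt 1]_(1 <= j < N.+1) elen xt yt j ->
  exists! s : nodal R N * nodal R N * nodal R N,
    zjb_solution k tau eta sigma xs ys xt yt s.1.1 s.1.2 s.2.
Proof.
move=> HN3 Htau Heta _ _ _ Hn Hmin.
apply: (@main_sec R N k tau eta xt yt sigma xs ys) => // j Hj.
apply: (lt_le_trans Hmin); apply: ge_bigmin_seq => //.
by rewrite mem_index_iota ltnS.
Qed.
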